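(* For all finite multisets $\Gamma,\Delta$ of ${\sf Frm_2}$-formulas: $\Gamma\Rightarrow\Delta$ is derivable in ${\sf GWF_{N_2}}$ if and only if $\Gamma^\square\Rightarrow\Delta^\square$ is derivable in ${\sf G3M_{Nec}}$.
   Context: Language: countably many atoms $p,q,\dots$, the constant $\bot$, and binary connectives $\wedge,\vee,\rightarrow$ ($\rightarrow$ is strict implication). ${\sf Frm}$ is the set of formulas built from atoms and $\bot$ with $\wedge,\vee,\rightarrow$; $A,B,C,D$ range over ${\sf Frm}$. Let $\supset$ be a new binary symbol (material implication) and ${\sf Frm_1}={\sf Frm}\cup\{A\supset B : A,B\in{\sf Frm}\}$ (no nesting of $\supset$). ${\sf Frm_2}$ is the smallest set containing ${\sf Frm_1}$ and closed under $\wedge$ and $\vee$; $X,Y$ range over ${\sf Frm_2}$. A sequent is $\Gamma\Rightarrow\Delta$ with $\Gamma,\Delta$ finite multisets of ${\sf Frm_2}$-formulas. The calculus ${\sf GWF_{N_2}}$ has initial sequents $(id)$ $p,\Gamma\Rightarrow\Delta,p$ ($p$ an atom) and $(L_\bot)$ $\bot,\Gamma\Rightarrow\Delta$, and rules (premises / conclusion): $(L_\wedge)$ $X,Y,\Gamma\Rightarrow\Delta$ / $X\wedge Y,\Gamma\Rightarrow\Delta$; $(R_\wedge)$ $\Gamma\Rightarrow\Delta,X$ and $\Gamma\Rightarrow\Delta,Y$ / $\Gamma\Rightarrow\Delta,X\wedge Y$; $(L_\vee)$ $X,\Gamma\Rightarrow\Delta$ and $Y,\Gamma\Rightarrow\Delta$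 / $X\vee Y,\Gamma\Rightarrow\Delta$; $(R_\vee)$ $\Gamma\Rightarrow\Delta,X,Y$ / $\Gamma\Rightarrow\Delta,X\vee Y$; $(L_\supset)$ $\Gamma\Rightarrow\Delta,A$ and $B,\Gamma\Rightarrow\Delta$ / $A\supset B,\Gamma\Rightarrow\Delta$; $(R_\supset)$ $A,\Gamma\Rightarrow\Delta,B$ / $\Gamma\Rightarrow\Delta,A\supset B$; $(LR_\rightarrow)$ $C\supset D,A\Rightarrow B$ / $\Gamma,C\rightarrow D\Rightarrow\Delta,A\rightarrow B$; $(R_\rightarrow)$ $A\Rightarrow B$ / $\Gamma\Rightarrow\Delta,A\rightarrow B$. Here $A,B,C,D\in{\sf Frm}$, $X,Y\in{\sf Frm_2}$, and $\Gamma,\Delta$ are arbitrary finite multisets of ${\sf Frm_2}$-formulas. The modal language $\mathcal{L}_\square$ has atoms, $\bot$, binary $\wedge,\vee,\supset$ and unary $\square$. The sequent calculus ${\sf G3M_{Nec}}$ (sequents $\Gamma\Rightarrow\Delta$ of finite multisets of $\mathcal{L}_\square$-formulas; here $A,B$ are arbitrary $\mathcal{L}_\square$-formulas) has initial sequents $p,\Gamma\Rightarrow\Delta,p$ ($p$ an atom) and $\bot,\Gamma\Rightarrow\Delta$; rules: $A,B,\Gamma\Rightarrow\Delta$ / $A\wedge B,\Gamma\Rightarrow\Delta$; $\Gamma\Rightarrow\Delta,A$ and $\Gamma\Rightarrow\Delta,B$ / $\Gamma\Rightarrow\Delta,A\wedge B$; $A,\Gamma\Rightarrow\Delta$ and $B,\Gamma\Rightarrow\Delta$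 / $A\vee B,\Gamma\Rightarrow\Delta$; $\Gamma\Rightarrow\Delta,A,B$ / $\Gamma\Rightarrow\Delta,A\vee B$; $\Gamma\Rightarrow\Delta,A$ and $B,\Gamma\Rightarrow\Delta$ / $A\supset B,\Gamma\Rightarrow\Delta$; $A,\Gamma\Rightarrow\Delta,B$ / $\Gamma\Rightarrow\Delta,A\supset B$; $(LR_{M_\square})$ $A\Rightarrow B$ / $\square A,\Gamma\Rightarrow\Delta,\square B$; $(R_{N_\square})$ $\Rightarrow B$ / $\Gamma\Rightarrow\Delta,\square B$. The $\square$-translation from formulas built with $\wedge,\vee,\rightarrow,\supset,\bot$ into $\mathcal{L}_\square$ is: $p^\square=p$, $\bot^\square=\bot$, $(A\circ B)^\square=A^\square\circ B^\square$ for $\circ\in\{\wedge,\vee,\supset\}$, $(A\rightarrow B)^\square=\square(A^\square\supset B^\square)$; for a multiset $\Gamma$, $\Gamma^\square=\{A^\square : A\in\Gamma\}$ (as a multiset). *)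

(* Defs.v *)
(* Sequents are pairs of lists; multisets are modelled as
   lists closed under permutation (explicit exchange rule). *)
From Stdlib Require Import List Permutation.
Import ListNotations.

Inductive form : Type :=
| FAtom : nat -> form
| FBot : form
| FAnd : form -> form -> form
| FOr : form -> form -> form
| FSImp : form -> form -> form
| FMImp : form -> form -> form.

Fixpoint isFrm (A : form) : Prop :=
  match A with
  | FAtom _ | FBot => True
  | FAnd A B | FOr A B | FSImp A B => isFrm A /\ isFrm B
  | FMImp _ _ => False
  end.

Definition isFrm1 (X : form) : Prop :=
  isFrm X \/ exists A B, X = FMImp A B /\ isFrm A /\ isFrm B.

Inductive isFrm2 : form -> Prop :=
| Frm2_base : forall X, isFrm1 X -> isFrm2 X
| Frm2_and : forall X Y, isFrm2 X -> isFrm2 Y -> isFrm2 (FAnd X Y)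
| Frm2_or : forall X Y, isFrm2 X -> isFrm2 Y -> isFrm2 (FOr X Y).

Definition allFrm2 (G : list form) : Prop := Forall isFrm2 G.

Inductive GWF : list form -> list form -> Prop :=
| GWF_exch : forall G D G' D', GWF G D -> Permutation G G' -> Permutation D D' -> GWF G' D'
| GWF_id : forall p G D, allFrm2 G -> allFrm2 D -> GWF (FAtom p :: G) (FAtom p :: D)
| GWF_Lbot : forall G D, allFrm2 G -> allFrm2 D -> GWF (FBot :: G) D
| GWF_Land : forall X Y G D, isFrm2 X -> isFrm2 Y ->
    GWF (X :: Y :: G) D -> GWF (FAnd X Y :: G) D
| GWF_Rand : forall X Y G D, isFrm2 X -> isFrm2 Y ->
    GWF G (X :: D) -> GWF G (Y :: D) -> GWF G (FAnd X Y :: D)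
| GWF_Lor : forall X Y G D, isFrm2 X -> isFrm2 Y ->
    GWF (X :: G) D -> GWF (Y :: G) D -> GWF (FOr X Y :: G) D
| GWF_Ror : forall X Y G D, isFrm2 X -> isFrm2 Y ->
    GWF G (X :: Y :: D) -> GWF G (FOr X Y :: D)
| GWF_Lmimp : forall A B G D, isFrm A -> isFrm B ->
    GWF G (A :: D) -> GWF (B :: G) D -> GWF (FMImp A B :: G) D
| GWF_Rmimp : forall A B G D, isFrm A -> isFrm B ->
    GWF (A :: G) (B :: D) -> GWF G (FMImp A B :: D)
| GWF_LRsimp : forall A B C D G Dl, isFrm A -> isFrm B -> isFrm C -> isFrm D ->
    allFrm2 G -> allFrm2 Dl ->
    GWF [FMImp C D; A] [B] -> GWF (FSImp C D :: G) (FSImp A B :: Dl)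
| GWF_Rsimp : forall A B G D, isFrm A -> isFrm B -> allFrm2 G -> allFrm2 D ->
    GWF [A] [B] -> GWF G (FSImp A B :: D).

Inductive mform : Type :=
| MAtom : nat -> mform
| MBot : mform
| MAnd : mform -> mform -> mform
| MOr : mform -> mform -> mform
| MImp : mform -> mform -> mform
| MBox : mform -> mform.

Inductive G3M : list mform -> list mform -> Prop :=
| G3M_exch : forall G D G' D', G3M G D -> Permutation G G' -> Permutation D D' -> G3M G' D'
| G3M_id : forall p G D, G3M (MAtom p :: G) (MAtom p :: D)
| G3M_Lbot : forall G D, G3M (MBot :: G) D
| G3M_Land : forall A B G D, G3M (A :: B :: G) D -> G3M (MAnd A B :: G) D
| G3M_Rand : forall A B G D, G3M G (A :: D) -> G3M G (B :: D) -> G3M G (MAnd A B :: D)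
| G3M_Lor : forall A B G D, G3M (A :: G) D -> G3M (B :: G) D -> G3M (MOr A B :: G) D
| G3M_Ror : forall A B G D, G3M G (A :: B :: D) -> G3M G (MOr A B :: D)
| G3M_Limp : forall A B G D, G3M G (A :: D) -> G3M (B :: G) D -> G3M (MImp A B :: G) D
| G3M_Rimp : forall A B G D, G3M (A :: G) (B :: D) -> G3M G (MImp A B :: D)
| G3M_LRM : forall A B G D, G3M [A] [B] -> G3M (MBox A :: G) (MBox B :: D)
| G3M_RN : forall B G D, G3M [] [B] -> G3M G (MBox B :: D).

Fixpoint boxtr (A : form) : mform :=
  match A with
  | FAtom p => MAtom p
  | FBot => MBot
  | FAnd A B => MAnd (boxtr A) (boxtr B)
  | FOr A B => MOr (boxtr A) (boxtr B)
  | FMImp A B => MImp (boxtr A) (boxtr B)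
  | FSImp A B => MBox (MImp (boxtr A) (boxtr B))
  end.

(* Main.v *)
Require Import Defs.
From Stdlib Require Import List Permutation.
Import ListNotations.

Lemma frm_frm2 : forall A, isFrm A -> isFrm2 A.
Proof. intros; constructor; left; auto. Qed.

Lemma frm2_and : forall X Y, isFrm2 (FAnd X Y) -> isFrm2 X /\ isFrm2 Y.
Proof.
  intros X Y H; inversion H; subst; auto.
  destruct H0 as [[H1 H2]|[a [b [E _]]]]; [split; apply frm_frm2; auto|discriminate].
Qed.
Lemma frm2_or : forall X Y, isFrm2 (FOr X Y) -> isFrm2 X /\ isFrm2 Y.
Proof.
  intros X Y H; inversion H; subst; auto.
  destruct H0 as [[H1 H2]|[a [b [E _]]]]; [split; apply frm_frm2; auto|discriminate].
Qed.
Lemma frm2_mimp : forall X Y, isFrm2 (FMImp X Y) -> isFrm X /\ isFrm Y.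
Proof.
  intros X Y H; inversion H; subst.
  destruct H0 as [[]|[a [b [E [? ?]]]]]; injection E; intros; subst; auto.
Qed.
Lemma frm2_simp : forall X Y, isFrm2 (FSImp X Y) -> isFrm X /\ isFrm Y.
Proof.
  intros X Y H; inversion H; subst.
  destruct H0 as [[]|[a [b [E [? ?]]]]]; [auto|discriminate].
Qed.

Lemma all_perm : forall l l', Permutation l l' -> allFrm2 l -> allFrm2 l'.
Proof. intros l l' P H. unfold allFrm2 in *. rewrite <- P. auto. Qed.

Lemma wf : forall G D, GWF G D -> allFrm2 G /\ allFrm2 D.
Proof.
  induction 1; unfold allFrm2 in *; repeat match goal with H: _ /\ _ |- _ => destruct H end;
    repeat match goal with H : Forall _ (_ :: _) |- _ => inversion H; subst; clear H end;
    split; repeat apply Forall_cons; auto;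
    try (apply Frm2_and; auto; fail); try (apply Frm2_or; auto; fail);
    try (apply frm_frm2; simpl; auto; fail);
    try (constructor; right; eauto 6; fail);
    try (eapply all_perm; eauto; fail).
Qed.

Ltac pm n := match n with
 | 0 => fail
 | S ?m => first [ reflexivity | apply perm_swap
   | apply perm_skip; pm m
   | (etransitivity; [apply perm_swap|]; apply perm_skip; pm m)
   | (etransitivity; [apply perm_skip; apply perm_swap|]; pm m)
   | (etransitivity; [|apply perm_swap]; apply perm_skip; pm m)
   | (etransitivity; [|apply perm_skip; apply perm_swap]; pm m) ] end.
Ltac pmt := pm 6.

Lemma sound : forall G D, GWF G D -> G3M (map boxtr G) (map boxtr D).
Proof.
  induction 1; simpl in *.
  - eapply G3M_exch; eauto; apply Permutation_map; auto.
  - apply G3M_id.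
  - apply G3M_Lbot.
  - apply G3M_Land; auto.
  - apply G3M_Rand; auto.
  - apply G3M_Lor; auto.
  - apply G3M_Ror; auto.
  - apply G3M_Limp; auto.
  - apply G3M_Rimp; auto.
  - apply G3M_LRM. apply G3M_Rimp. eapply G3M_exch; [eassumption|apply perm_swap|reflexivity].
  - apply G3M_RN. apply G3M_Rimp. auto.
Qed.

Lemma perm_split : forall (T:Type) (x y : T) l m, Permutation (x::l) (y::m) ->
  (x = y /\ Permutation l m) \/ exists k, Permutation m (x::k) /\ Permutation l (y::k).
Proof.
  intros T x y l m P.
  destruct (Permutation_in x P (or_introl eq_refl)) as [E|I].
  - left; subst; split; auto. eapply Permutation_cons_inv; eauto.
  - right. destruct (in_split _ _ I) as [l1 [l2 E]]; subst.
    exists (l1 ++ l2). split.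
    + symmetry; apply Permutation_middle.
    + apply (Permutation_cons_inv (a:=x)). rewrite P.
      etransitivity; [apply perm_skip; symmetry; apply Permutation_middle|]. apply perm_swap.
Qed.

Lemma rinv : forall G D', GWF G D' -> forall A B D, Permutation D' (FMImp A B :: D) ->
  isFrm A -> isFrm B -> GWF (A::G) (B::D).
Proof.
  induction 1; intros A0 B0 D0 P HA HB.
  - eapply GWF_exch; [apply IHGWF; [rewrite H1; exact P|auto|auto] | apply perm_skip; auto | reflexivity].
  - destruct (perm_split _ _ _ _ _ P) as [[E _]|[k [P1 P2]]]; [discriminate|].
    apply GWF_exch with (FAtom p :: A0 :: G) (FAtom p :: B0 :: k).
    + apply GWF_id; constructor; auto using frm_frm2.
      pose proof (all_perm _ _ P2 H0) as HW; inversion HW; auto.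
    + apply perm_swap.
    + rewrite P1. apply perm_swap.
  - apply GWF_exch with (FBot :: A0 :: G) (B0 :: D0).
    + apply GWF_Lbot; constructor; auto using frm_frm2.
      pose proof (all_perm _ _ P H0) as HW; inversion HW; auto.
    + apply perm_swap.
    + reflexivity.
  - apply GWF_exch with (FAnd X Y :: A0 :: G) (B0 :: D0); [|apply perm_swap|reflexivity].
    apply GWF_Land; auto. eapply GWF_exch; [apply (IHGWF A0 B0 D0); auto| pmt | reflexivity].
  - destruct (perm_split _ _ _ _ _ P) as [[E _]|[k [P1 P2]]]; [discriminate|].
    apply GWF_exch with (A0 :: G) (FAnd X Y :: B0 :: k); [|reflexivity| rewrite P1; pmt].
    apply GWF_Rand; auto.
    + eapply GWF_exch; [apply (IHGWF1 A0 B0 (X::k)); [rewrite P2; pmt|auto|auto] | reflexivity | pmt].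
    + eapply GWF_exch; [apply (IHGWF2 A0 B0 (Y::k)); [rewrite P2; pmt|auto|auto] | reflexivity | pmt].
  - apply GWF_exch with (FOr X Y :: A0 :: G) (B0 :: D0); [|apply perm_swap|reflexivity].
    apply GWF_Lor; auto.
    + eapply GWF_exch; [apply (IHGWF1 A0 B0 D0); auto| pmt | reflexivity].
    + eapply GWF_exch; [apply (IHGWF2 A0 B0 D0); auto| pmt | reflexivity].
  - destruct (perm_split _ _ _ _ _ P) as [[E _]|[k [P1 P2]]]; [discriminate|].
    apply GWF_exch with (A0 :: G) (FOr X Y :: B0 :: k); [|reflexivity| rewrite P1; pmt].
    apply GWF_Ror; auto.
    eapply GWF_exch; [apply (IHGWF A0 B0 (X::Y::k)); [rewrite P2; pmt|auto|auto] | reflexivity | pmt].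
  - apply GWF_exch with (FMImp A B :: A0 :: G) (B0 :: D0); [|apply perm_swap|reflexivity].
    apply GWF_Lmimp; auto.
    + eapply GWF_exch; [apply (IHGWF1 A0 B0 (A::D0)); [rewrite P; pmt|auto|auto]| reflexivity | pmt].
    + eapply GWF_exch; [apply (IHGWF2 A0 B0 D0); auto| pmt | reflexivity].
  - destruct (perm_split _ _ _ _ _ P) as [[E P']|[k [P1 P2]]].
    + injection E; intros; subst. eapply GWF_exch; [eauto|reflexivity|apply perm_skip; auto].
    + apply GWF_exch with (A0 :: G) (FMImp A B :: B0 :: k); [|reflexivity| rewrite P1; pmt].
      apply GWF_Rmimp; auto.
      eapply GWF_exch; [apply (IHGWF A0 B0 (B::k)); [rewrite P2; pmt|auto|auto] | pmt | pmt].
  - destruct (perm_split _ _ _ _ _ P) as [[E _]|[k [P1 P2]]]; [discriminate|].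
    apply GWF_exch with (FSImp C D :: A0 :: G) (FSImp A B :: B0 :: k); [|apply perm_swap| rewrite P1; pmt].
    apply GWF_LRsimp; auto; constructor; auto using frm_frm2.
    pose proof (all_perm _ _ P2 H4) as HW; inversion HW; auto.
  - destruct (perm_split _ _ _ _ _ P) as [[E _]|[k [P1 P2]]]; [discriminate|].
    apply GWF_exch with (A0 :: G) (FSImp A B :: B0 :: k); [|reflexivity| rewrite P1; pmt].
    apply GWF_Rsimp; auto; constructor; auto using frm_frm2.
    pose proof (all_perm _ _ P2 H2) as HW; inversion HW; auto.
Qed.

Ltac dm := repeat match goal with
  | H : _ :: _ = map boxtr ?G |- _ =>
      destruct G as [|?f ?G]; simpl in H; [discriminate|]; injection H as ?E ?E; subst
  | H : _ = boxtr ?f |- _ => destruct f; simpl in H; try discriminate; try (injection H; intros; subst); try clear H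
  | H : allFrm2 (_ :: _) |- _ => inversion H; subst; clear H
  | H : isFrm2 (FAnd _ _) |- _ => apply frm2_and in H as [? ?]
  | H : isFrm2 (FOr _ _) |- _ => apply frm2_or in H as [? ?]
  | H : isFrm2 (FMImp _ _) |- _ => apply frm2_mimp in H as [? ?]
  | H : isFrm2 (FSImp _ _) |- _ => apply frm2_simp in H as [? ?]
  end.
Ltac ih IH := first [apply (IH (_::_) (_::_) eq_refl eq_refl) | apply (IH (_::_::_) _ eq_refl eq_refl) | apply (IH (_::_) _ eq_refl eq_refl) | apply (IH _ (_::_::_) eq_refl eq_refl) | apply (IH _ (_::_) eq_refl eq_refl) | apply (IH _ _ eq_refl eq_refl)].

Lemma compl : forall G' D', G3M G' D' -> forall G D, G' = map boxtr G -> D' = map boxtr D ->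
  allFrm2 G -> allFrm2 D -> GWF G D.
Proof.
  induction 1; intros G0 D0 EG ED HG HD; subst.
  - destruct (Permutation_map_inv _ _ H0) as [G1 [E1 P1]].
    destruct (Permutation_map_inv _ _ H1) as [D1 [E2 P2]].
    eapply GWF_exch; [eapply IHG3M; eauto| symmetry; auto | symmetry; auto].
    + eapply all_perm; eauto.
    + eapply all_perm; eauto.
  - dm. apply GWF_id; auto.
  - dm. apply GWF_Lbot; auto.
  - dm. apply GWF_Land; auto. ih IHG3M; repeat apply Forall_cons; auto.
  - dm. apply GWF_Rand; auto; [ih IHG3M1|ih IHG3M2]; repeat apply Forall_cons; auto.
  - dm. apply GWF_Lor; auto; [ih IHG3M1|ih IHG3M2]; repeat apply Forall_cons; auto.
  - dm. apply GWF_Ror; auto. ih IHG3M; repeat apply Forall_cons; auto.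
  - dm. apply GWF_Lmimp; auto; [ih IHG3M1|ih IHG3M2]; repeat apply Forall_cons; auto using frm_frm2.
  - dm. apply GWF_Rmimp; auto. ih IHG3M; repeat apply Forall_cons; auto using frm_frm2.
  - dm. apply GWF_LRsimp; auto.
    eapply GWF_exch; [eapply rinv; [apply (IHG3M [FMImp _ _] [FMImp _ _] eq_refl eq_refl)| reflexivity | ..] | apply perm_swap | reflexivity]; auto.
    all: repeat apply Forall_cons; auto using frm_frm2; constructor; right; eauto.
  - dm. apply GWF_Rsimp; auto.
    eapply rinv; [apply (IHG3M [] [FMImp _ _] eq_refl eq_refl)| reflexivity | ..]; auto.
    all: repeat apply Forall_cons; auto using frm_frm2; constructor; right; eauto.
Qed.

Theorem theorem4p1 : forall (G D : list form), allFrm2 G -> allFrm2 D ->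
  (GWF G D <-> G3M (map boxtr G) (map boxtr D)).
Proof.
  intros G D HG HD; split; [apply sound | intro H; eapply compl; eauto].
Qed.
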